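(* Let $\mathbf q=(\mathbf r,\mathbf x)\in\mathbb Z_{\ge1}^n$ with support vector $\mathbf r=(r_1,\dots,r_d)$, $r_1<r_2<\cdots<r_d$, $d\ge 2$ (i.e. $\mathbf q$ has at least two distinct entries), and multiplicity vector $\mathbf x=(x_1,\dots,x_d)\in\mathbb Z_{\ge1}^d$. If $\Delta_{(1,\mathbf q)}$ is reflexive and has the integer decomposition property, then $$x_i\le \frac{r_{i+1}}{r_i}\qquad\text{for all } 1\le i\le d-1 .$$ Further, if there exists some $j<d$ with $r_j\nmid r_d$, then $$x_d\le \frac{r_j}{r_d \bmod r_j}.$$ Consequently, if there exists some $j<d$ with $r_j\nmid r_d$, then there are at most finitely many vectors $\mathbf q$ supported on $\mathbf r$ (i.e. finitely many multiplicity vectors $\mathbf x$) for which $\Delta_{(1,\mathbf q)}$ is reflexive and IDP.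
   Context: For $\mathbf q=(q_1,\dots,q_n)\in\mathbb Z_{\ge1}^n$ with $q_1\le\cdots\le q_n$, let $\Delta_{(1,\mathbf q)}=\mathrm{conv}\{e_1,\dots,e_n,-\sum_{i=1}^n q_ie_i\}\subset\mathbb R^n$, where $e_i$ are the standard basis vectors. A lattice polytope $P\subset\mathbb R^n$ has the integer decomposition property (IDP) if for every integer $m\ge1$, every point of $mP\cap\mathbb Z^n$ is a sum of $m$ points of $P\cap\mathbb Z^n$. A lattice polytope is reflexive if, after translation by an integer vector, the origin lies in its interior and its polar dual is also a lattice polytope; it is known that $\Delta_{(1,\mathbf q)}$ is reflexive if and only if $q_i$ divides $1+\sum_{j=1}^n q_j$ for every $i$. Given distinct positive integers $r_1,\dots,r_d$ and positive integers $x_1,\dots,x_d$, the notation $\mathbf q=(\mathbf r,\mathbf x)=(r_1^{x_1},\dots,r_d^{x_d})$ denotes the vector consisting of $x_1$ copies of $r_1$, then $x_2$ copies of $r_2$, ..., then $x_d$ copies of $r_d$; $\mathbf r$ is called the support vector and $\mathbf x$ the multiplicity vector of $\mathbf q$, and $\mathbf q$ is ''supported on $\mathbf r$''. *)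

(* Defs.v *)
(* Polytopes are handled through their rational points. *)
From mathcomp Require Import all_boot all_order all_algebra.
Set Implicit Arguments. Unset Strict Implicit. Unset Printing Implicit Defensive.
Import Order.TTheory GRing.Theory Num.Theory.
Local Open Scope ring_scope.

Notation vec n := 'rV[rat]_n.

Definition lattice_pt n (v : vec n) : Prop :=
  forall i : 'I_n, exists z : int, v 0 i = z%:~R.

Definition conv n (V : seq (vec n)) (p : vec n) : Prop :=
  exists lam : 'I_(size V) -> rat,
    (forall i, 0 <= lam i) /\ \sum_i lam i = 1 /\
    \sum_i lam i *: V`_i = p.

Definition lattice_polytope n (P : vec n -> Prop) : Prop :=
  exists W : seq (vec n), (forall w, w \in W -> lattice_pt w) /\
    forall y, P y <-> conv W y.

Definition dilate n (m : nat) (P : vec n -> Prop) (p : vec n) : Prop :=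
  exists y, P y /\ p = m%:R *: y.

Definition IDP n (P : vec n -> Prop) : Prop :=
  forall m : nat, (1 <= m)%N -> forall p, dilate m P p -> lattice_pt p ->
    exists f : 'I_m -> vec n, (forall i, P (f i) /\ lattice_pt (f i)) /\
      \sum_i f i = p.

Definition dotv n (x y : vec n) : rat := \sum_i x 0 i * y 0 i.

Definition interior_pt n (P : vec n -> Prop) (p : vec n) : Prop :=
  exists eps : rat, 0 < eps /\
    forall y : vec n, (forall i, `|y 0 i - p 0 i| < eps) -> P y.

Definition polar n (P : vec n -> Prop) (y : vec n) : Prop :=
  forall x, P x -> dotv x y >= -1.

Definition reflexive_polytope n (P : vec n -> Prop) : Prop :=
  lattice_polytope P /\
  exists t : vec n, lattice_pt t /\
    let Q := fun x => P (x + t) in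
    interior_pt Q 0 /\ lattice_polytope (polar Q).

(* Delta_(1,q) = conv{e_1,...,e_n, - sum q_i e_i} *)
Definition Delta_verts (q : seq nat) : seq (vec (size q)) :=
  rcons [seq delta_mx 0 i | i <- enum 'I_(size q)]
        (- \sum_(i < size q) (nth 0%N q i)%:R *: delta_mx 0 i).

Definition Delta (q : seq nat) : vec (size q) -> Prop := conv (Delta_verts q).

(* q = (r, x) = (r_1^{x_1}, ..., r_d^{x_d}) *)
Definition qvec (r x : seq nat) : seq nat :=
  flatten [seq nseq p.2 p.1 | p <- zip r x].

Arguments Delta_verts : clear implicits.
Arguments Delta : clear implicits.

(* Main.v *)
Require Import Defs.
From mathcomp Require Import all_boot all_order all_algebra.
From mathcomp Require Import zify ring lra.
Set Implicit Arguments. Unset Strict Implicit. Unset Printing Implicit Defensive.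
Import Order.TTheory GRing.Theory Num.Theory.
Local Open Scope ring_scope.

Definition qq (q : seq nat) (i : 'I_(size q)) : rat := (nth 0%N q i)%:R.
Definition NN (q : seq nat) : rat := 1 + \sum_(i < size q) qq i.

Lemma size_DV q : size (Delta_verts q) = (size q).+1.
Proof. by rewrite size_rcons size_map size_enum_ord. Qed.

Lemma nth_DV_lt q (i : 'I_(size q)) : (Delta_verts q)`_i = delta_mx 0 i.
Proof.
rewrite /Delta_verts nth_rcons size_map size_enum_ord ltn_ord.
by rewrite (nth_map i) ?size_enum_ord // nth_ord_enum.
Qed.

Lemma nth_DV_last q : (Delta_verts q)`_(size q) =
   - \sum_(i < size q) (nth 0%N q i)%:R *: delta_mx 0 i.
Proof. by rewrite /Delta_verts nth_rcons size_map size_enum_ord ltnn eqxx. Qed.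

Lemma conv_DV q z : conv (Delta_verts q) z <->
  exists l : 'I_(size q).+1 -> rat, (forall i, 0 <= l i) /\ \sum_i l i = 1 /\
    \sum_i l i *: (Delta_verts q)`_i = z.
Proof. by rewrite /conv size_DV. Qed.

Lemma coord_sum n (l : 'I_n -> rat) j :
  (\sum_i l i *: (delta_mx 0 i : vec n)) 0 j = l j.
Proof.
have -> : \sum_i l i *: (delta_mx 0 i : vec n) = \sum_i (\row_k l k) 0 i *: delta_mx 0 i.
  by apply: eq_bigr => i _; rewrite mxE.
by rewrite -row_sum_delta mxE.
Qed.

Lemma widen_lift n (i : 'I_n) : widen_ord (leqnSn n) i = lift ord_max i.
Proof. by apply: val_inj; rewrite /= /bump leqNgt ltn_ord. Qed.

Lemma DeltaP q (z : vec (size q)) : Delta q z <->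
  exists l0 : rat, 0 <= l0 /\ (forall j, 0 <= z 0 j + l0 * qq j) /\
     \sum_j z 0 j = 1 - l0 * NN q.
Proof.
rewrite /Delta conv_DV; split.
- move=> [l [l0 [l1 l2]]]; exists (l ord_max); split => //.
  rewrite big_ord_recr /= nth_DV_last in l2.
  have l3 : \sum_(i < size q) l (widen_ord (leqnSn _) i) *: (Delta_verts q)`_(widen_ord (leqnSn _) i)
     = \sum_(i < size q) l (widen_ord (leqnSn _) i) *: delta_mx 0 i.
    by apply: eq_bigr => i _; rewrite nth_DV_lt.
  rewrite l3 scalerN scaler_sumr in l2.
  have zj : forall j, z 0 j = l (widen_ord (leqnSn _) j) - l ord_max * qq j.
    move=> j; rewrite -l2 !mxE coord_sum; congr (_ - _).
    rewrite summxE (bigD1 j) //= big1 ?addr0.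
      by rewrite !mxE !eqxx mulr1 /qq.
    by move=> k /negbTE kj; rewrite !mxE eq_sym kj mulr0 mulr0.
  split.
    by move=> j; rewrite zj subrK.
  under eq_bigr do rewrite zj.
  rewrite sumrB; rewrite big_ord_recr /= in l1.
  rewrite /NN -mulr_sumr mulrDr mulr1; lra.
- move=> [l0 [h0 [h1 h2]]].
  exists (fun i => oapp (fun j => z 0 j + l0 * qq j) l0 (unlift ord_max i)).
  split; first by move=> i; case: (unlift _ _) => //=.
  rewrite big_ord_recr /= unlift_none /=.
  under eq_bigr do rewrite widen_lift liftK /=.
  split.
    rewrite big_split /= -mulr_sumr h2 /NN; lra.
  rewrite big_ord_recr /= unlift_none /= nth_DV_last.
  under eq_bigr do rewrite nth_DV_lt widen_lift liftK /=.
  rewrite scalerN scaler_sumr; apply/rowP => j; rewrite !mxE coord_sum summxE (bigD1 j) //= big1 ?addr0.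
    by rewrite !mxE !eqxx mulr1 /qq; ring.
  by move=> k /negbTE kj; rewrite !mxE eq_sym kj mulr0 mulr0.
Qed.

Lemma dotv_sum n (u : vec n) m (F : 'I_m -> vec n) (c : 'I_m -> rat) :
  dotv u (\sum_k c k *: F k) = \sum_k c k * dotv u (F k).
Proof.
rewrite /dotv; under eq_bigr do rewrite summxE mulr_sumr.
rewrite exchange_big /=; apply: eq_bigr => k _; rewrite mulr_sumr.
by apply: eq_bigr => i _; rewrite mxE; ring.
Qed.

Lemma extreme n (P : vec n -> Prop) (U : vec n -> Prop) y :
 lattice_polytope P -> P y -> (forall w, P w -> forall u, U u -> -1 <= dotv u w) ->
 (forall u, U u -> dotv u y = -1) ->
 (forall w, P w -> (forall u, U u -> dotv u w = -1) -> w = y) -> lattice_pt y.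
Proof.
move=> [W [HW HP]] Py Hge Hy Huniq.
have WinP : forall i : 'I_(size W), P W`_i.
  move=> i; apply/HP; exists (fun k => (k == i)%:R); split.
    by move=> k; case: (k == i).
  split.
    by rewrite (bigD1 i) //= eqxx big1 ?addr0 // => k /negbTE ->.
  rewrite (bigD1 i) //= eqxx scale1r big1 ?addr0 // => k /negbTE ->.
  by rewrite scale0r.
have [lam [l0 [l1 l2]]] := (proj1 (HP y) Py).
case: (pickP (fun i => 0 < lam i)) => [i hi | h]; last first.
  have : \sum_i lam i = 0 by apply: big1 => i _; move: (h i) (l0 i) => /= /negbT; rewrite -leNgt => a b; apply/eqP; rewrite eq_le a b.
  by rewrite l1 => /eqP; rewrite oner_eq0.
have -> : y = W`_i.
  symmetry; apply: Huniq => // u Uu.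
  have e : \sum_k lam k * (dotv u W`_k + 1) = 0.
    under eq_bigr do rewrite mulrDr mulr1.
    rewrite big_split /= -dotv_sum l2 Hy // l1; ring.
  have := psumr_eq0P (P := predT) _ e (i := i) isT.
  move=> /(_ _)/eqP; rewrite mulf_eq0 gt_eqF //= addr_eq0 => /(_ _)/eqP -> //.
  by move=> k _; rewrite mulr_ge0 //; have := Hge _ (WinP k) u Uu; lra.
apply: HW; exact: mem_nth.
Qed.

Lemma lat_int n (v : vec n) : lattice_pt v -> forall i, v 0 i = (numq (v 0 i))%:~R.
Proof. by move=> h i; case: (h i) => z ->; rewrite numq_int. Qed.

Lemma sum_delta n (k : 'I_n) : \sum_j (delta_mx 0 k : vec n) 0 j = 1.
Proof. by rewrite (bigD1 k) //= big1 ?addr0 ?mxE ?eqxx // => j /negbTE jk; rewrite mxE jk andbF. Qed.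

Lemma dotv_e n (k : 'I_n) (w : vec n) : dotv (delta_mx 0 k) w = w 0 k.
Proof.
rewrite /dotv (bigD1 k) //= big1 ?addr0 ?mxE ?eqxx ?mul1r // => j /negbTE jk.
by rewrite mxE jk andbF mul0r.
Qed.

Lemma qq_ge0 q j : 0 <= qq (q:=q) j.
Proof. by rewrite /qq ler0n. Qed.

Lemma NN_nat q : NN q = (1 + sumn q)%:R.
Proof.
rewrite /NN natrD; congr (_ + _).
rewrite sumnE (big_nth 0%N) big_mkord natr_sum; by apply: eq_bigr.
Qed.

Lemma Delta_e q k : Delta q (delta_mx 0 k).
Proof.
apply/DeltaP; exists 0; split => //; split.
  by move=> j; rewrite mul0r addr0 mxE ler0n.
by rewrite sum_delta mul0r subr0.
Qed.

Definition vv q : vec (size q) := - \sum_i qq i *: delta_mx 0 i.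

Lemma vv_coord q j : vv q 0 j = - qq j.
Proof. by rewrite /vv mxE coord_sum. Qed.

Lemma Delta_v q : Delta q (vv q).
Proof.
apply/DeltaP; exists 1; split => //; split.
  by move=> j; rewrite vv_coord mul1r addNr.
under eq_bigr do rewrite vv_coord.
by rewrite sumrN /NN; ring.
Qed.

Lemma dotv_v q (w : vec (size q)) : dotv (vv q) w = - \sum_j qq j * w 0 j.
Proof. rewrite /dotv -sumrN; apply: eq_bigr => j _; rewrite vv_coord; ring. Qed.

Lemma dotvBl n (a b w : vec n) : dotv (a - b) w = dotv a w - dotv b w.
Proof. by rewrite /dotv -sumrB; apply: eq_bigr => i _; rewrite !mxE mulrBl. Qed.

Lemma sumqq_ge0 q : 0 <= \sum_(i < size q) qq i.
Proof. by apply: sumr_ge0 => i _; apply: qq_ge0. Qed.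

Lemma NN_split q (k : 'I_(size q)) : NN q = 1 + qq k + \sum_(j | j != k) qq j.
Proof. by rewrite /NN (bigD1 k) //= addrA. Qed.

Lemma qq_lt_NN q (k : 'I_(size q)) : qq k < NN q.
Proof.
rewrite (NN_split k); have : 0 <= \sum_(j | j != k) qq (q:=q) j.
  by apply: sumr_ge0 => i _; apply: qq_ge0.
lra.
Qed.

Lemma NN_gt0 q : 0 < NN q.
Proof. have := sumqq_ge0 q; rewrite /NN; lra. Qed.

Lemma sum_int n (t : vec n) : lattice_pt t ->
  \sum_i t 0 i = (\sum_i numq (t 0 i))%:~R.
Proof.
move=> h; rewrite rmorph_sum /=; apply: eq_bigr => i _; exact: lat_int.
Qed.

Lemma refl_t0 q (t : vec (size q)) : (0 < size q)%N -> lattice_pt t ->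
  interior_pt (fun x => Delta q (x + t)) 0 ->
  lattice_polytope (polar (fun x => Delta q (x + t))) -> t = 0.
Proof.
move=> n0 tlat [eps [e0 he]] pol.
set zs := \sum_i numq (t 0 i).
have hzs : \sum_i t 0 i = zs%:~R by apply: sum_int.
have zs0 : (zs <= 0)%R.
  have /DeltaP [l0 [l00 [_ hs]]] : Delta q (const_mx (eps / 2) + t).
    by apply: he => i; rewrite !mxE subr0 ger0_norm; lra.
  have NN0 := NN_gt0 q.
  have : \sum_j (const_mx (eps / 2) + t) 0 j = eps / 2 *+ size q + zs%:~R.
    rewrite -hzs (eq_bigr (fun i => eps / 2 + t 0 i)); last by move=> i _; rewrite !mxE.
    by rewrite big_split /= sumr_const card_ord.
  rewrite hs => hh.
  have : 0 < eps / 2 *+ size q by rewrite pmulrn_rgt0 //; lra.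
  have : 0 <= l0 * NN q by rewrite mulr_ge0 // ltW.
  move=> h1 h2.
  have : zs%:~R < (1 : rat) by lra.
  rewrite -[1 : rat]/(1%:~R) ltr_int; lia.
set s : rat := 1 - \sum_i t 0 i.
have s1 : 1 <= s.
  have : (zs%:~R <= (0 : rat)) by rewrite -[0 : rat]/(0%:~R) ler_int.
  rewrite /s hzs; lra.
have s0 : 0 < s by lra.
set y0 : vec (size q) := const_mx (- s^-1).
have dy0 : forall x, dotv x y0 = - (\sum_i x 0 i) / s.
  move=> x; rewrite /dotv -sumrN mulr_suml; apply: eq_bigr => i _; rewrite mxE; ring.
have ly0 : lattice_pt y0.
  apply: (extreme (U := fun u => exists j, u = delta_mx 0 j - t) pol).
  - move=> x /DeltaP [l0 [l00 [_ hs]]]; rewrite dy0.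
    have : \sum_j (x + t) 0 j = \sum_j x 0 j + \sum_j t 0 j.
      by rewrite -big_split; apply: eq_bigr => i _; rewrite mxE.
    rewrite hs => hh.
    rewrite ler_pdivlMr //.
    have : 0 <= l0 * NN q by rewrite mulr_ge0 // ltW // NN_gt0.
    rewrite /s in s0 *; lra.
  - move=> w pw u [j ->]; apply: pw; rewrite subrK; exact: Delta_e.
  - move=> u [j ->]; rewrite dy0.
    have -> : \sum_i (delta_mx 0 j - t) 0 i = s.
      by rewrite /s -(sum_delta j) -sumrB; apply: eq_bigr => i _; rewrite !mxE.
    by rewrite mulNr divff ?gt_eqF.
  - move=> w pw hw.
    set a := dotv t w.
    have wj : forall j, w 0 j = a - 1.
      move=> j; have := hw _ (ex_intro _ j erefl); rewrite dotvBl dotv_e /a; lra.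
    have ha : a = (a - 1) * (1 - s).
      rewrite {1}/a /dotv /s; under eq_bigr do rewrite wj.
      by rewrite mulrBr mulr1 -mulr_suml mulrC; ring.
    have ha2 : a - 1 = - s^-1.
      apply: (mulIf (x := s)); first by rewrite gt_eqF.
      rewrite mulNr mulVf ?gt_eqF //; rewrite mulrC; lra.
    by apply/rowP => j; rewrite wj ha2 mxE.
have sz1 : zs = 0.
  have k : 'I_(size q) by exists 0%N.
  have := lat_int ly0 k; rewrite mxE.
  set w := numq _ => hw.
  have : s * (- s^-1) = -1 by rewrite mulrN divff // gt_eqF.
  rewrite hw /s hzs -[1 : rat]/(1%:~R) -intrB -intrM -[-1 : rat]/((-1)%:~R).
  move=> /intr_inj hw2.
  case: (lerP 0 w) => hw0; nia.
have zpos : forall j, (0 <= numq (t 0 j))%R.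
  move=> j.
  have /DeltaP [l0 [l00 [hj hs]]] : Delta q (- (eps / 2) *: delta_mx 0 j + t).
    apply: he => i; rewrite !mxE subr0.
    case: (_ && _) => /=; rewrite ?mulr1n ?mulr0n ?mulr1 ?mulr0 ?normr0 ?normrN ?ger0_norm; lra.
  have hsum : \sum_j0 (- (eps / 2) *: delta_mx 0 j + t) 0 j0 = - (eps / 2) + zs%:~R.
    rewrite -hzs (eq_bigr (fun i => -(eps/2) * (delta_mx 0 j : vec _) 0 i + t 0 i)); last by move=> i _; rewrite !mxE.
    by rewrite big_split /= -mulr_sumr sum_delta mulr1.
  rewrite hsum sz1 addr0 in hs.
  have := hj j; rewrite !mxE !eqxx mulr1.
  have hN := qq_lt_NN j.
  have l0p : 0 < l0.
    rewrite lt_def l00 andbT; apply/eqP => e; rewrite e mul0r in hs; lra.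
  have : l0 * qq j < l0 * NN q by rewrite ltr_pM2l.
  move=> h1 h2.
  have : (-1)%:~R < (t 0 j) by lra.
  move=> h; rewrite (lat_int tlat j) ltr_int in h; lia.
have z0 : forall j, numq (t 0 j) = 0.
  move=> j; apply: (psumr_eq0P (P := predT) (fun i _ => zpos i) sz1 (i := j)).
  done.
by apply/rowP => j; rewrite (lat_int tlat) z0 mxE.
Qed.

Lemma refl_dvd0 q (k : 'I_(size q)) : (0 < nth 0%N q k)%N ->
  lattice_polytope (polar (fun x => Delta q (x + 0))) -> (nth 0%N q k %| 1 + sumn q)%N.
Proof.
move=> qk0 pol.
have qkp : 0 < qq k by rewrite /qq ltr0n.
have qkn : qq k != 0 by rewrite gt_eqF.
set N := NN q.
set S' := \sum_(j | j != k) qq (q:=q) j.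
have hN : N = 1 + qq k + S' by rewrite /N (NN_split k).
set yk : vec (size q) := \row_i (if i == k then (N - qq k) / qq k else -1).
have ly : lattice_pt yk.
  apply: (extreme (U := fun u => (exists2 i, i != k & u = delta_mx 0 i) \/ u = vv q) pol).
  - move=> x; rewrite addr0 => /DeltaP [l0 [l00 [hx hs]]].
    rewrite /dotv (bigD1 k) //= mxE eqxx.
    rewrite (eq_bigr (fun i => - x 0 i)); last first.
      by move=> i /negbTE ik; rewrite mxE ik mulrN1.
    rewrite sumrN.
    move: hs; rewrite (bigD1 k) //= -/N => hs.
    have e : x 0 k * ((N - qq k) / qq k) = x 0 k * N / qq k - x 0 k by field; exact: qkn.
    rewrite e.
    have e2 : x 0 k * N / qq k = N / qq k * (x 0 k + l0 * qq k) - l0 * N by field; exact: qkn.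
    rewrite e2.
    have : 0 <= N / qq k * (x 0 k + l0 * qq k).
      by rewrite mulr_ge0 // divr_ge0 // ltW // NN_gt0.
    lra.
  - move=> w pw u [[i _ ->]| ->]; apply: pw; rewrite addr0.
      exact: Delta_e.
    exact: Delta_v.
  - move=> u [[i ik ->]| ->].
      by rewrite dotv_e mxE (negbTE ik).
    rewrite dotv_v (bigD1 k) //= mxE eqxx.
    rewrite (eq_bigr (fun i => - qq i)); last first.
      by move=> i /negbTE ik; rewrite mxE ik mulrN1.
    rewrite sumrN -/S' hN; field; exact: qkn.
  - move=> w pw hw.
    have wi : forall i, i != k -> w 0 i = -1.
      by move=> i ik; rewrite -(dotv_e i w); apply: hw; left; exists i.
    have := hw _ (or_intror erefl); rewrite dotv_v (bigD1 k) //=.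
    rewrite (eq_bigr (fun i => - qq i)); last first.
      by move=> i ik; rewrite wi // mulrN1.
    rewrite sumrN -/S' => e.
    apply/rowP => i; rewrite mxE; case: eqP => [->|/eqP ik]; last exact: wi.
    apply: (mulIf qkn); rewrite mulfVK // hN; lra.
have := lat_int ly k; rewrite mxE eqxx.
set w := numq _ => hw.
have : N = qq k * (w + 1)%:~R.
  rewrite intrD -hw; field; exact: qkn.
rewrite /N NN_nat /qq -[((1 + sumn q)%:R : rat)]/(((1 + sumn q)%N%:Z)%:~R).
rewrite -[((nth 0%N q k)%:R : rat)]/(((nth 0%N q k)%:Z)%:~R) -intrM.
move=> /intr_inj e.
have : (((nth 0%N q k)%:Z) %| ((1 + sumn q)%N%:Z))%Z by rewrite e dvdz_mulr.
by rewrite dvdzE.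
Qed.

Lemma sumn_ord (q : seq nat) (g : nat -> nat) :
  sumn [seq g a | a <- q] = (\sum_(i < size q) g (nth 0%N q i))%N.
Proof. by rewrite sumnE big_map (big_nth 0%N) big_mkord. Qed.

Lemma int_floor (F : int) (a R : nat) : (0 < R)%N ->
  (0 <= R%:Z * F + a%:Z)%R -> (- (a %/ R)%N%:Z <= F)%R.
Proof.
move=> R0 h.
have ea := divn_eq a R; have lt := ltn_pmod a R0.
set d := (a %/ R)%N in ea *; set r := (a %% R)%N in ea lt.
have : (a%:Z = d%:Z * R%:Z + r%:Z)%R by rewrite ea PoszD PoszM.
move=> e; rewrite e in h.
have : (r%:Z < R%:Z)%R by rewrite ltz_nat.
move=> lt'.
have : (0 < R%:Z)%R by rewrite ltz_nat.
move=> R0'.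
nia.
Qed.

Lemma idp_bound q (k : 'I_(size q)) : (0 < nth 0%N q k)%N ->
  (nth 0%N q k %| 1 + sumn q)%N -> IDP (Delta q) ->
  (\sum_(i < size q) (nth 0%N q i %% nth 0%N q k) < nth 0%N q k)%N.
Proof.
move=> R0 Rdvd idp; rewrite ltnNge; apply/negP => HM.
set R := nth 0%N q k in R0 Rdvd HM *.
set Kn := (\sum_(i < size q) (nth 0%N q i %/ R))%N.
set Mn := (\sum_(i < size q) (nth 0%N q i %% R))%N in HM.
have hsum : sumn q = (R * Kn + Mn)%N.
  have -> : sumn q = (\sum_(i < size q) nth 0%N q i)%N by rewrite -(sumn_ord q id) map_id.
  rewrite /Kn /Mn big_distrr -big_split /=.
  by apply: eq_bigr => i _; rewrite mulnC -divn_eq.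
set b := ((1 + sumn q) %/ R)%N.
have hb : (b * R = 1 + sumn q)%N by rewrite divnK.
set m := (b - Kn)%N.
have hKb : (Kn < b)%N by nia.
have hm : (m * R = 1 + Mn)%N by rewrite /m mulnBl; nia.
have m2 : (2 <= m)%N by nia.
have Rr : 0 < (R%:R : rat) by rewrite ltr0n.
have hN : NN q = (b%:R * R%:R : rat) by rewrite NN_nat -hb natrM.
have hbK : (m%:R + Kn%:R = b%:R :> rat) by rewrite -natrD /m subnK // ltnW.
have mr : 0 < (m%:R : rat) by rewrite ltr0n; lia.
have br : 0 < (b%:R : rat) by rewrite ltr0n; lia.
set p : vec (size q) := \row_i (- ((nth 0%N q i %/ R)%N%:R)).
have sump : \sum_j p 0 j = - Kn%:R.
  by rewrite /Kn natr_sum -sumrN; apply: eq_bigr => i _; rewrite mxE.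
have platt : lattice_pt p.
  by move=> i; exists (- ((nth 0%N q i %/ R)%N%:Z))%R; rewrite mxE intrN.
have dil : dilate m (Delta q) p.
  exists ((m%:R)^-1 *: p); split; last by rewrite scalerA divff ?scale1r // gt_eqF.
  apply/DeltaP; exists ((R%:R * m%:R)^-1); split.
    by rewrite invr_ge0 mulr_ge0 // ltW.
  split.
    move=> j; rewrite !mxE /qq.
    have e := divn_eq (nth 0%N q j) R.
    have : ((nth 0%N q j)%:R = (nth 0%N q j %/ R)%N%:R * R%:R + (nth 0%N q j %% R)%N%:R :> rat).
      by rewrite {1}e natrD natrM.
    move=> ->.
    have -> : (m%:R)^-1 * - (nth 0%N q j %/ R)%N%:R + (R%:R * m%:R)^-1 *
      ((nth 0%N q j %/ R)%N%:R * R%:R + (nth 0%N q j %% R)%N%:R) =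
      (nth 0%N q j %% R)%N%:R / (R%:R * m%:R) :> rat.
      by field; rewrite ?(gt_eqF mr) ?(gt_eqF Rr).
    by rewrite divr_ge0 // ltW // mulr_gt0.
  rewrite (eq_bigr (fun j => (m%:R)^-1 * p 0 j)); last by move=> j _; rewrite mxE.
  rewrite -mulr_sumr sump hN -hbK.
  by field; rewrite ?(gt_eqF mr) ?(gt_eqF Rr).
have [f [hf hsumf]] := idp m (ltnW m2) p dil platt.
have coordf : forall j, \sum_i f i 0 j = p 0 j.
  by move=> j; rewrite -hsumf summxE.
have NN0 := NN_gt0 q.
set lam := fun i => (1 - \sum_j f i 0 j) / NN q.
have hlam : forall i, 0 <= lam i /\ forall j, 0 <= f i 0 j + lam i * qq j.
  move=> i; have [/DeltaP [l0 [l00 [h1 h2]]] _] := hf i.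
  have -> : lam i = l0 by rewrite /lam h2; field; rewrite (gt_eqF NN0).
  by split.
have sumlam : \sum_i lam i = (R%:R)^-1.
  rewrite /lam -mulr_suml sumrB sumr_const card_ord exchange_big /=.
  under eq_bigr do rewrite coordf.
  rewrite sump hN -hbK; field; by rewrite ?(gt_eqF mr) ?(gt_eqF Rr) hbK (gt_eqF br).
have pk : p 0 k = -1 by rewrite mxE divnn R0.
have intf : forall i j, f i 0 j = (numq (f i 0 j))%:~R.
  by move=> i; apply: lat_int; case: (hf i).
case: (pickP (fun i => f i 0 k < 0)) => [i0 hi0 | hnone]; last first.
  have : 0 <= \sum_i f i 0 k.
    apply: sumr_ge0 => i _; have := hnone i; rewrite /= ltNge => /negbFE //.
  by rewrite coordf pk; lra.
have hi0' : f i0 0 k <= -1.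
  move: hi0; rewrite intf -[0 : rat]/(0%:~R) -[-1 : rat]/((-1)%:~R) ltr_int ler_int.
  lia.
have lam0 : (R%:R)^-1 <= lam i0.
  have := (hlam i0).2 k; rewrite /qq -/R => h.
  rewrite -[(R%:R)^-1]mul1r ler_pdivrMr //; lra.
have lamrest : \sum_(i | i != i0) lam i = 0.
  have := sumlam; rewrite (bigD1 i0) //= => e.
  have : 0 <= \sum_(i | i != i0) lam i by apply: sumr_ge0 => i _; exact: (hlam i).1.
  lra.
have lamz : forall i, i != i0 -> lam i = 0.
  by move=> i hi; apply: (psumr_eq0P (fun i _ => (hlam i).1) lamrest).
have lami0 : lam i0 = (R%:R)^-1.
  have := sumlam; rewrite (bigD1 i0) //= lamrest addr0 //.
have fpos : forall i j, i != i0 -> 0 <= f i 0 j.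
  by move=> i j hi; have := (hlam i).2 j; rewrite lamz // mul0r addr0.
have fi0 : forall j, p 0 j <= f i0 0 j.
  move=> j; have := (hlam i0).2 j; rewrite lami0 /qq => h.
  have : (0 <= R%:R * f i0 0 j + (nth 0%N q j)%:R :> rat).
    have -> : (R%:R * f i0 0 j + (nth 0%N q j)%:R :> rat) = R%:R * (f i0 0 j + (R%:R)^-1 * (nth 0%N q j)%:R).
      by field; rewrite (gt_eqF Rr).
    by rewrite mulr_ge0 // ltW.
  rewrite intf mxE -[((nth 0%N q j)%:R : rat)]/(((nth 0%N q j)%:Z)%:~R) -[(R%:R : rat)]/((R%:Z)%:~R).
  rewrite -intrM -intrD -[0 : rat]/(0%:~R) ler_int => /(int_floor R0).
  by rewrite -[((_ %/ _)%N%:R : rat)]/(((_ %/ _)%N%:Z)%:~R) -intrN ler_int.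
pose i1 : 'I_m := if i0 == 0 :> nat then Ordinal m2 else Ordinal (ltnW m2).
have i10 : i1 != i0.
  apply/eqP => e'; move: (congr1 val e'); rewrite /i1.
  case: eqVneq => [h|h] /=; first by rewrite h.
  by move=> e2; rewrite -e2 eqxx in h.
have lam1 : lam i1 = 0 by apply: lamz.
have sum1 : \sum_j f i1 0 j = 1.
  move: lam1; rewrite /lam => /eqP; rewrite mulf_eq0 invr_eq0 (gt_eqF NN0) orbF subr_eq0.
  by move=> /eqP <-.
have : \sum_j f i1 0 j <= 0.
  apply: sumr_le0 => j _.
  have := coordf j; rewrite (bigD1 i0) //= (bigD1 i1 (P := fun i => i != i0)) //=.
  have : 0 <= \sum_(i | (i != i0) && (i != i1)) f i 0 j.
    by apply: sumr_ge0 => i /andP [hi _]; apply: fpos.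
  have := fi0 j; lra.
rewrite sum1; lra.
Qed.

Lemma refl_dvd q (k : 'I_(size q)) : (0 < nth 0%N q k)%N ->
  reflexive_polytope (Delta q) -> (nth 0%N q k %| 1 + sumn q)%N.
Proof.
move=> qk [_ [t [tl [hi hp]]]].
have t0 := refl_t0 (leq_ltn_trans (leq0n _) (ltn_ord k)) tl hi hp.
rewrite t0 in hp; exact: refl_dvd0.
Qed.

Lemma key q R : all (fun a => 0 < a)%N q -> R \in q ->
  reflexive_polytope (Delta q) -> IDP (Delta q) ->
  (sumn [seq a %% R | a <- q] < R)%N.
Proof.
move=> qpos Rq hr hi.
have kl : (index R q < size q)%N by rewrite index_mem.
have hk : nth 0%N q (Ordinal kl) = R by rewrite /= nth_index.
have R0 : (0 < R)%N by move/allP: qpos => /(_ R Rq).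
rewrite sumn_ord.
have := @idp_bound q (Ordinal kl); rewrite hk; apply => //.
by have := @refl_dvd q (Ordinal kl); rewrite hk; apply.
Qed.

Lemma mem_qvec r x a : a \in qvec r x -> a \in r.
Proof.
elim: r x => [|b r IH] [|c x] //=.
rewrite /qvec /= mem_cat => /orP [|h].
  by move=> /nseqP [-> _]; rewrite inE eqxx.
by rewrite inE (IH x h) orbT.
Qed.

Lemma qvec_block r x i (g : nat -> nat) : size x = size r -> (i < size r)%N ->
  (nth 0%N x i * g (nth 0%N r i) <= sumn [seq g a | a <- qvec r x])%N.
Proof.
elim: r x i => [|b r IH] [|c x] i //= [sx] hi.
rewrite /qvec /= map_cat sumn_cat map_nseq sumn_nseq.
case: i hi => [_|i hi] /=.
  by rewrite mulnC leq_addr.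
apply: leq_trans (IH x i sx hi) (leq_addl _ _).
Qed.

Lemma in_qvec r x i : size x = size r -> (i < size r)%N -> (0 < nth 0%N x i)%N ->
  nth 0%N r i \in qvec r x.
Proof.
elim: r x i => [|b r IH] [|c x] i //= [sx] hi.
rewrite /qvec /= mem_cat.
case: i hi => [_|i hi] /= hc.
  by apply/orP; left; rewrite mem_nseq hc eqxx.
by apply/orP; right; apply: IH.
Qed.

Lemma nth_le_sumn s i : (i < size s)%N -> (nth 0%N s i <= sumn s)%N.
Proof.
elim: s i => [|a s IH] [|i] //= hi; first exact: leq_addr.
exact: leq_trans (IH i hi) (leq_addl _ _).
Qed.

Fixpoint allseqs (d B : nat) : seq (seq nat) :=
  if d is d'.+1 then [seq a :: s | a <- iota 0 B.+1, s <- allseqs d' B] else [:: [::]].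

Lemma allseqsS d B : allseqs d.+1 B = [seq a :: s | a <- iota 0 B.+1, s <- allseqs d B].
Proof. by []. Qed.

Lemma mem_allseqs B x : (forall i, (i < size x)%N -> (nth 0%N x i <= B)%N) ->
  x \in allseqs (size x) B.
Proof.
elim: x => [|a x IH] h; first exact: mem_head.
rewrite (_ : size (a :: x) = (size x).+1) // allseqsS.
apply: (allpairs_f (fun a s => a :: s)).
  by rewrite mem_iota add0n ltnS (h 0%N).
by apply: IH => i hi; apply: (h i.+1).
Qed.

Unset Implicit Arguments.

Theorem theorem3p3 (r : seq nat) :
  (2 <= size r)%N -> sorted ltn r -> all (fun a => 0 < a)%N r ->
  (forall x : seq nat, size x = size r -> all (fun m => 0 < m)%N x ->
     reflexive_polytope (Delta (qvec r x)) -> IDP (Delta (qvec r x)) ->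
     (forall i : nat, (i.+1 < size r)%N ->
        (nth 0%N x i)%:R <= (nth 0%N r i.+1)%:R / (nth 0%N r i)%:R :> rat) /\
     (forall j : nat, (j < (size r).-1)%N ->
        ~~ (nth 0%N r j %| nth 0%N r (size r).-1)%N ->
        (nth 0%N x (size r).-1)%:R
          <= (nth 0%N r j)%:R / (nth 0%N r (size r).-1 %% nth 0%N r j)%:R :> rat))
  /\
  ((exists j : nat, (j < (size r).-1)%N /\
       ~~ (nth 0%N r j %| nth 0%N r (size r).-1)%N) ->
   exists S : seq (seq nat), forall x : seq nat,
     size x = size r -> all (fun m => 0 < m)%N x ->
     reflexive_polytope (Delta (qvec r x)) -> IDP (Delta (qvec r x)) ->
     x \in S).
Proof.
move=> hr2 hsort hrpos.
have rpos : forall i, (i < size r)%N -> (0 < nth 0%N r i)%N by apply/all_nthP.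
have dlt : ((size r).-1 < size r)%N by rewrite prednK // (leq_trans _ hr2).
have part1 : forall x : seq nat, size x = size r -> all (fun m => 0 < m)%N x ->
     reflexive_polytope (Delta (qvec r x)) -> IDP (Delta (qvec r x)) ->
     (forall i : nat, (i.+1 < size r)%N ->
        (nth 0%N x i * nth 0%N r i < nth 0%N r i.+1)%N) /\
     (forall j : nat, (j < (size r).-1)%N ->
        ~~ (nth 0%N r j %| nth 0%N r (size r).-1)%N ->
        (nth 0%N x (size r).-1 * (nth 0%N r (size r).-1 %% nth 0%N r j) < nth 0%N r j)%N).
  move=> x sx xpos hrf hidp.
  have qpos : all (fun a => 0 < a)%N (qvec r x).
    by apply/allP => a /mem_qvec ar; exact: (allP hrpos).
  have xp : forall i, (i < size r)%N -> (0 < nth 0%N x i)%N.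
    by move=> i hi; apply: (all_nthP 0%N xpos); rewrite sx.
  split.
  - move=> i hi.
    have hi' : (i < size r)%N by apply: ltnW.
    have Rq := in_qvec sx hi (xp _ hi).
    have hk := key qpos Rq hrf hidp.
    have hb := qvec_block (fun a => a %% nth 0%N r i.+1)%N sx hi'.
    have lt : (nth 0%N r i < nth 0%N r i.+1)%N.
      by apply: (sorted_ltn_nth ltn_trans 0%N hsort) => //; rewrite inE.
    rewrite /= modn_small // in hb.
    exact: leq_ltn_trans hb hk.
  - move=> j hj hnd.
    have hj' : (j < size r)%N by apply: ltn_trans hj dlt.
    have Rq := in_qvec sx hj' (xp _ hj').
    have hk := key qpos Rq hrf hidp.
    have hb := qvec_block (fun a => a %% nth 0%N r j)%N sx dlt.
    exact: leq_ltn_trans hb hk.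
split.
  move=> x sx xpos hrf hidp; have [h1 h2] := part1 x sx xpos hrf hidp.
  split.
    move=> i hi; have := h1 i hi.
    rewrite ler_pdivlMr; last by rewrite ltr0n rpos // ltnW.
    rewrite -natrM ler_nat => h; exact: ltnW.
  move=> j hj hnd; have := h2 j hj hnd.
  have e0 : (0 < nth 0%N r (size r).-1 %% nth 0%N r j)%N by rewrite lt0n.
  rewrite ler_pdivlMr ?ltr0n // -natrM ler_nat => h; exact: ltnW.
move=> [j [hj hnd]]; exists (allseqs (size r) (sumn r)).
move=> x sx xpos hrf hidp; have [h1 h2] := part1 x sx xpos hrf hidp.
rewrite -sx; apply: mem_allseqs => i hi; rewrite sx in hi.
case: (ltnP i.+1 (size r)) => hi2.
  have := h1 i hi2; have := rpos i hi => ri h.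
  apply: leq_trans (nth_le_sumn hi2).
  apply: leq_trans (ltnW h); by rewrite leq_pmulr.
have ei : i = (size r).-1 by move: hi hi2; case: (size r) => //= n; lia.
have := h2 j hj hnd.
rewrite -ei => h.
have e0 : (0 < nth 0%N r i %% nth 0%N r j)%N by rewrite ei lt0n.
have hj' : (j < size r)%N by apply: ltn_trans hj dlt.
apply: leq_trans (nth_le_sumn hj').
apply: leq_trans (ltnW h); by rewrite leq_pmulr.
Qed.
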